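(* Let $\mathcal{G}^{\mathbb{c}}=(\mathbb{C},\mathbb{E}^{\mathbb{c}})$ be a C-DMG and $\mathbb{C}_\mathbb{X},\mathbb{C}_\mathbb{Y},\mathbb{C}_\mathbb{Z},\mathbb{C}_\mathbb{W}$ pairwise disjoint subsets of $\mathbb{C}$; for a compatible ADMG let $\mathbb{X},\mathbb{Y},\mathbb{Z},\mathbb{W}$ denote the unions of the clusters in $\mathbb{C}_\mathbb{X},\mathbb{C}_\mathbb{Y},\mathbb{C}_\mathbb{Z},\mathbb{C}_\mathbb{W}$ respectively. Assume that either (i) the sizes of the clusters are unknown (compatible ADMGs may have clusters of any nonempty sizes), or (ii) every cluster contains more than one variable. Then: (1) if $\mathbb{C}_\mathbb{Y}$ and $\mathbb{C}_\mathbb{X}$ are not d-separated by $\mathbb{C}_\mathbb{Z}\cup\mathbb{C}_\mathbb{W}$ in $\mathcal{G}^{\mathbb{c}}_{\overline{\mathbb{C}_\mathbb{Z}}}$, there exists a compatible ADMG $\mathcal{G}$ in which $\mathbb{Y}$ and $\mathbb{X}$ are not d-separated by $\mathbb{Z}\cup\mathbb{W}$ in $\mathcal{G}_{\overline{\mathbb{Z}}}$; (2) if $\mathbb{C}_\mathbb{Y}$ and $\mathbb{C}_\mathbb{X}$ are not d-separated by $\mathbb{C}_\mathbb{Z}\cup\mathbb{C}_\mathbb{W}$ in $\mathcal{G}^{\mathbb{c}}_{\overline{\mathbb{C}_\mathbb{Z}}\underline{\mathbb{C}_\mathbb{X}}}$, there exists a compatible ADMG $\mathcal{G}$ in which $\mathbb{Y}$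 and $\mathbb{X}$ are not d-separated by $\mathbb{Z}\cup\mathbb{W}$ in $\mathcal{G}_{\overline{\mathbb{Z}}\underline{\mathbb{X}}}$; (3) if $\mathbb{C}_\mathbb{Y}$ and $\mathbb{C}_\mathbb{X}$ are not d-separated by $\mathbb{C}_\mathbb{Z}\cup\mathbb{C}_\mathbb{W}$ in $\mathcal{G}^{\mathbb{c}}_{\overline{\mathbb{C}_\mathbb{Z}}\,\overline{\mathbb{C}_\mathbb{X}(\mathbb{C}_\mathbb{W})}}$, there exists a compatible ADMG $\mathcal{G}$ in which $\mathbb{Y}$ and $\mathbb{X}$ are not d-separated by $\mathbb{Z}\cup\mathbb{W}$ in $\mathcal{G}_{\overline{\mathbb{Z}}\,\overline{\mathbb{X}(\mathbb{W})}}$. That is, whenever one of the three do-calculus rules does not apply in $\mathcal{G}^{\mathbb{c}}$, there is a compatible ADMG in which the corresponding classical do-calculus rule does not apply.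
   Context: An ADMG is a graph with directed and bidirected edges whose directed edges form no directed cycle. A C-DMG $\mathcal{G}^{\mathbb{c}}=(\mathbb{C},\mathbb{E}^{\mathbb{c}})$ compatible with an ADMG $\mathcal{G}=(\mathbb{V},\mathbb{E})$ has as vertex set a partition $\mathbb{C}$ of $\mathbb{V}$ into clusters, with $C_i\rightarrow C_j$ (resp. $C_i\leftrightarrow C_j$), possibly $i=j$, an edge iff some $X\in C_i$, $Y\in C_j$ have $X\rightarrow Y$ (resp. $X\leftrightarrow Y$) in $\mathcal{G}$; C-DMGs may have directed cycles and self-loops. For a graph $\mathcal{G}^*$ and vertex sets $\mathbb{A},\mathbb{B}$, $\mathcal{G}^*_{\overline{\mathbb{A}}\underline{\mathbb{B}}}$ is obtained by removing all edges coming into $\mathbb{A}$ (directed edges with head in $\mathbb{A}$ and bidirected edges with an endpoint in $\mathbb{A}$) and all directed edges going out of $\mathbb{B}$. $\mathbb{C}_\mathbb{X}(\mathbb{C}_\mathbb{W})$ is the set of vertices of $\mathbb{C}_\mathbb{X}$ that are not ancestors of any vertex of $\mathbb{C}_\mathbb{W}$ in $\mathcal{G}^{\mathbb{c}}_{\overline{\mathbb{C}_\mathbb{Z}}}$; similarly $\mathbb{X}(\mathbb{W})$ is the set of vertices of $\mathbb{X}$ that are not ancestors of any vertex of $\mathbb{W}$ in $\mathcal{G}_{\overline{\mathbb{Z}}}$. Ancestors/descendants include the vertex itself. A walk $\langle V_1,\dots,V_n\rangle$ is blocked by $\mathbb{W}^*$ if $V_1\in\mathbb{W}^*$ or $V_n\in\mathbb{W}^*$;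 or for some $1<i<n$ the walk contains $V_{i-1}\,*\!-\!*\,V_i\rightarrow V_{i+1}$ or $V_{i-1}\leftarrow V_i\,*\!-\!*\,V_{i+1}$ (any edge type for $*\!-\!*$) with $V_i\in\mathbb{W}^*$; or for some $1<i<n$ it contains $V_{i-1}\,*\!\!\rightarrow V_i\leftarrow\!\!*\,V_{i+1}$ (edges directed into $V_i$ or bidirected) with no descendant of $V_i$ in $\mathbb{W}^*$. A path is a walk without repeated vertices; $\mathbb{W}^*$ d-separates $\mathbb{X}^*$ and $\mathbb{Y}^*$ if it blocks every path between a vertex of $\mathbb{X}^*$ and a vertex of $\mathbb{Y}^*$. *)

(* Defs.v *)
From mathcomp Require Import all_boot.
Set Implicit Arguments. Unset Strict Implicit. Unset Printing Implicit Defensive.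

(* A mixed graph: [de x y] means x -> y, [bi x y] means x <-> y. *)
Record mgraph (T : finType) := MGraph { de : rel T; bi : rel T }.

(* Kinds of edges traversed by a walk, from the current vertex u to the next v:
   Fwd : u -> v,  Bwd : u <- v,  Bid : u <-> v. *)
Inductive ekind := Fwd | Bwd | Bid.

Definition is_fwd k := if k is Fwd then true else false.
Definition is_bwd k := if k is Bwd then true else false.
Definition head_at_end k := match k with Fwd | Bid => true | Bwd => false end.
Definition head_at_start k := match k with Bwd | Bid => true | Fwd => false end.

Section Graphs.
Variable T : finType.

Definition is_ADMG (G : mgraph T) : Prop :=
  (forall x y, bi G x y = bi G y x) /\
  (forall x, ~~ bi G x x) /\
  (forall x y, de G x y -> ~~ connect (de G) y x).

(* G_{\overline{A} \underline{B}} : remove edges coming into A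
   (directed with head in A, bidirected with an endpoint in A)
   and directed edges going out of B. *)
Definition mutilate (G : mgraph T) (A B : {set T}) : mgraph T :=
  MGraph (fun x y => [&& de G x y, y \notin A & x \notin B])
         (fun x y => [&& bi G x y, x \notin A & y \notin A]).

(* ancestors / descendants include the vertex itself: connect is reflexive *)
Definition anc (G : mgraph T) (x y : T) : bool := connect (de G) x y.

(* X(W): vertices of X that are not ancestors of any vertex of W in G_{\overline Z} *)
Definition nonanc (G : mgraph T) (Z X W : {set T}) : {set T} :=
  [set x in X | [forall w in W, ~~ anc (mutilate G Z set0) x w]].

(* A walk is a start vertex u and a sequence of steps (kind, next vertex). *)
Definition step_ok (G : mgraph T) (u : T) (e : ekind * T) : bool :=
  match e.1 with
  | Fwd => de G u e.2
  | Bwd => de G e.2 u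
  | Bid => bi G u e.2
  end.

Fixpoint walk_ok (G : mgraph T) (u : T) (s : seq (ekind * T)) : bool :=
  match s with
  | [::] => true
  | e :: s' => step_ok G u e && walk_ok G e.2 s'
  end.

Definition walk_verts (u : T) (s : seq (ekind * T)) : seq T := u :: map snd s.

Definition is_path (G : mgraph T) (u : T) (s : seq (ekind * T)) : bool :=
  walk_ok G u s && uniq (walk_verts u s).

(* The walk <V_1,...,V_n> (V_1 = u, n = size s + 1) is blocked by W. *)
Definition blocked (G : mgraph T) (W : {set T}) (u : T) (s : seq (ekind * T)) : Prop :=
  let vs := walk_verts u s in
  let ks := map fst s in
  u \in W \/ last u (map snd s) \in W \/
  exists i, (0 < i < size s)%N /\
    let vi := nth u vs i in
    let k1 := nth Bid ks i.-1 in   (* edge between V_{i-1} and V_i *)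
    let k2 := nth Bid ks i in      (* edge between V_i and V_{i+1} *)
    (* non-collider: V_{i-1} *-* V_i -> V_{i+1}  or  V_{i-1} <- V_i *-* V_{i+1} *)
    (((is_fwd k2 || is_bwd k1) /\ vi \in W) \/
    (* collider: V_{i-1} *-> V_i <-* V_{i+1} with no descendant of V_i in W *)
     ((head_at_end k1 && head_at_start k2) /\
      forall w, anc G vi w -> w \notin W)).

Definition dsep (G : mgraph T) (W X Y : {set T}) : Prop :=
  forall x s, x \in X -> last x (map snd s) \in Y -> is_path G x s -> blocked G W x s.

End Graphs.

Definition clus (C V : finType) (cl : V -> C) (CA : {set C}) : {set V} :=
  [set v | cl v \in CA].

(* G^c is compatible with the ADMG G on V whose partition into clusters is
   given by cl : V -> C (every cluster nonempty). *)
Definition compatible (C V : finType) (Gc : mgraph C) (cl : V -> C) (G : mgraph V) : Prop :=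
  is_ADMG G /\
  (forall c, exists v, cl v = c) /\
  (forall ci cj, de Gc ci cj <-> exists x y, [/\ cl x = ci, cl y = cj & de G x y]) /\
  (forall ci cj, bi Gc ci cj <-> exists x y, [/\ cl x = ci, cl y = cj & bi G x y]).

Definition is_CDMG (C : finType) (Gc : mgraph C) : Prop :=
  exists (V : finType) (cl : V -> C) (G : mgraph V), compatible Gc cl G.

(* Assumptions on cluster sizes:
   (i) Unknown : compatible ADMGs may have clusters of any nonempty sizes;
   (ii) Known sz : the cluster sizes are sz c, each > 1. *)
Inductive regime (C : finType) := Unknown | Known of (C -> nat).

Definition regime_ok (C : finType) (r : regime C) : Prop :=
  match r with Unknown => True | Known sz => forall c, (1 < sz c)%N end.

Definition sizes_match (C V : finType) (r : regime C) (cl : V -> C) : Prop :=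
  match r with
  | Unknown => True
  | Known sz => forall c, #|[set v | cl v == c]| = sz c
  end.

(* Main.v *)
Require Import Defs.
From mathcomp Require Import all_boot.
From mathcomp Require Import zify.
From Stdlib Require Classical_Prop.
Set Implicit Arguments. Unset Strict Implicit. Unset Printing Implicit Defensive.

Lemma connect_pot (T : finType) (e : rel T) (phi : T -> nat) :
  (forall x y, e x y -> phi x < phi y) -> forall x y, connect e x y -> phi x <= phi y.
Proof.
move=> H x y /connectP [p hp ->] {y}.
elim: p x hp => [|z p IH] x /=; first by [].
move=> /andP [exz hp]; apply: leq_trans (ltnW (H _ _ exz)) (IH _ hp).
Qed.

Lemma connect_homo (T T' : finType) (e : rel T) (e' : rel T') (f : T -> T') :
  (forall x y, e x y -> e' (f x) (f y)) -> forall x y, connect e x y -> connect e' (f x) (f y).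
Proof.
move=> H x y /connectP [p hp ->] {y}.
elim: p x hp => [|z p IH] x /=; first by rewrite connect0.
move=> /andP [exz hp]; apply: connect_trans (connect1 (H _ _ exz)) (IH _ hp).
Qed.

Fixpoint mono_ok (T : finType) (rho : T -> nat) (u : T) (s : seq (ekind * T)) : bool :=
  match s with
  | [::] => true
  | e :: s' => (match e.1 with Fwd => rho u < rho e.2 | Bwd => rho e.2 < rho u | Bid => true end)
               && mono_ok rho e.2 s'
  end.

Lemma mono_shift (T : finType) (rho rho' : T -> nat) u s :
  (forall c, c \in walk_verts u s -> rho c = (rho' c).+1) -> mono_ok rho' u s -> mono_ok rho u s.
Proof.
elim: s u => [|[k v] s IH] u //= H /andP [h1 h2].
rewrite (H u) ?inE ?eqxx // (H v) ?inE ?eqxx ?orbT //.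
apply/andP; split; first by move: h1; destruct k.
apply: IH h2 => c hc; apply: H; rewrite /walk_verts /= inE; apply/orP; right; exact hc.
Qed.

Lemma mono_exists (T : finType) (u : T) s : uniq (walk_verts u s) -> exists rho, mono_ok rho u s.
Proof.
elim: s u => [|[k v] s IH] u /=; first by exists (fun _ => 0).
rewrite /walk_verts /= => /andP [hu hv].
have [rho' h'] := IH v hv.
exists (fun c => if c == u then (match k with Bwd => (rho' v).+2 | _ => 0 end) else (rho' c).+1).
rewrite /= eqxx.
have hvu : (v == u) = false.
  by apply/negbTE; apply: contraNneq hu => ->; rewrite inE eqxx.
rewrite hvu; apply/andP; split; first by case: k.
apply: (mono_shift (rho' := rho')) => // c hc.
have -> : (c == u) = false by apply/negbTE; apply: contraNneq hu => <-; exact hc.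
by [].
Qed.

Section Dist.
Variables (T : finType) (e : rel T) (S : {set T}).
Fixpoint Rn n c := if n is m.+1 then Rn m c || [exists d, e c d && Rn m d] else c \in S.
Definition reach c := [exists t in S, connect e c t].
Lemma Rn_reach n c : Rn n c -> reach c.
Proof.
elim: n c => [|n IH] c /=.
  by move=> hc; apply/existsP; exists c; rewrite hc connect0.
case/orP => [/IH //|/existsP [d /andP [ecd /IH /existsP [t /andP [ht hdt]]]]].
by apply/existsP; exists t; rewrite ht (connect_trans (connect1 ecd) hdt).
Qed.
Lemma reach_Rn c : reach c -> exists n, Rn n c.
Proof.
case/existsP => t /andP [ht /connectP [p hp et]]; subst t.
elim: p c hp ht => [|d p IH] c /=; first by exists 0.
case/andP => ecd /IH hp /hp [n hn]; exists n.+1 => /=.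
by apply/orP; right; apply/existsP; exists d; rewrite ecd.
Qed.
Lemma exP c : exists n, Rn n c || ~~ reach c.
Proof.
case hr: (reach c); last by exists 0; rewrite orbT.
by have [n hn] := reach_Rn hr; exists n; rewrite hn.
Qed.
Definition dist c := ex_minn (exP c).
Lemma dist_prop c : reach c -> c \notin S -> exists d, [/\ e c d, reach d & dist d < dist c].
Proof.
move=> hr hS; rewrite /dist.
case: (ex_minnP (exP c)) => n hn hmin.
have {}hn : Rn n c by case/orP: hn => //; rewrite hr.
case: n hn hmin => [|n] /=; first by rewrite (negbTE hS).
case/orP => [hn' hmin|/existsP [d /andP [ecd hd]] hmin].
  by have := hmin n; rewrite hn' ltnn => /(_ isT).
exists d; split => //; first exact: Rn_reach hd.
case: (ex_minnP (exP d)) => m _ hm.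
by apply: leq_ltn_trans (hm n _) _; rewrite ?hd.
Qed.
End Dist.
Section Construction.
Variables (C : finType) (Gc : mgraph C) (sz : C -> nat).
Hypothesis hsz : forall c, 1 < sz c.
Variables (rhom rhoa : C -> nat).

Local Notation VV := {c : C & 'I_(sz c)}.
Definition clv (v : VV) : C := tag v.
Definition ism (v : VV) : bool := nat_of_ord (tagged v) == 0.
Definition mainv c : VV := Tagged (fun c => 'I_(sz c)) (Ordinal (ltnW (hsz c))).
Definition auxv c : VV := Tagged (fun c => 'I_(sz c)) (Ordinal (hsz c)).
Definition Gde (u v : VV) := de Gc (clv u) (clv v) &&
  [|| ism u && ~~ ism v, [&& ism u, ism v & rhom (clv u) < rhom (clv v)]
    | [&& ~~ ism u, ~~ ism v & rhoa (clv v) < rhoa (clv u)]].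
Definition Gbi (u v : VV) := bi Gc (clv u) (clv v) && (u != v).
Definition GG := MGraph Gde Gbi.

Lemma ism_main c : ism (mainv c). Proof. by []. Qed.
Lemma ism_aux c : ism (auxv c) = false. Proof. by []. Qed.
Lemma clv_main c : clv (mainv c) = c. Proof. by []. Qed.
Lemma clv_aux c : clv (auxv c) = c. Proof. by []. Qed.
Lemma mainv_inj : injective mainv.
Proof. by move=> a b /(congr1 clv). Qed.

Definition MM := (\max_(c : C) (rhom c + rhoa c)).+1.
Definition phi (v : VV) := if ism v then rhom (clv v) else MM + (MM - rhoa (clv v)).

Lemma phi_incr u v : Gde u v -> phi u < phi v.
Proof.
have hb c : rhom c + rhoa c < MM by rewrite ltnS (leq_bigmax (F := fun c => rhom c + rhoa c) c).
rewrite /Gde /phi => /andP [_].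
case: (ism u); case: (ism v) => //=; rewrite ?andbF ?orbF //=.
- move=> _; have := hb (clv u); lia.
- have := hb (clv u); have := hb (clv v); lia.
Qed.

Hypothesis bisym : forall a b, bi Gc a b = bi Gc b a.

Lemma GG_compat : compatible Gc clv GG.
Proof.
split; last split; last split.
- split; last split.
  + by move=> x y; rewrite /= /Gbi bisym eq_sym.
  + by move=> x; rewrite /= /Gbi eqxx andbF.
  + move=> x y hxy; apply/negP => hyx.
    have := connect_pot phi_incr hyx; have := phi_incr hxy; lia.
- by move=> c; exists (mainv c).
- move=> ci cj; split.
  + by move=> h; exists (mainv ci), (auxv cj); split => //; rewrite /= /Gde h.
  + by case=> x [y [<- <-]] /= /andP [].
- move=> ci cj; split.
  + case: (eqVneq ci cj) => [<-|ne] h.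
      exists (mainv ci), (auxv ci); split => //; rewrite /= /Gbi.
      by rewrite h /=; apply/eqP => /(congr1 ism).
    exists (mainv ci), (mainv cj); split => //; rewrite /= /Gbi.
    rewrite [clv _]/= [clv (mainv cj)]/= h /=.
    by apply: contra_neq ne => /mainv_inj.
  + by case=> x [y [<- <-]] /= /andP [].
Qed.

Lemma card_cluster c : #|[set v : VV | clv v == c]| = sz c.
Proof.
have inj : injective (Tagged (fun c => 'I_(sz c)) (i:=c)).
  by move=> i j /eqP; rewrite eq_Tagged /= => /eqP.
rewrite -[RHS](card_ord (sz c)) -cardsT -(card_imset _ inj).
congr (#|pred_of_set _|).
apply/setP => -[c' i]; rewrite !inE /clv /=; apply/eqP/imsetP.
  by move=> e; subst c'; exists i.
by case=> j _ /(congr1 (@tag _ _)).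
Qed.

End Construction.
Lemma clus_set0 (C V : finType) (cl : V -> C) : clus cl set0 = set0.
Proof. by apply/setP => v; rewrite !inE. Qed.
Lemma clus_setU (C V : finType) (cl : V -> C) A B : clus cl (A :|: B) = clus cl A :|: clus cl B.
Proof. by apply/setP => v; rewrite !inE. Qed.

Lemma anc_mut3 (C : finType) (Gc : mgraph C) (CZ CX CW : {set C}) c w :
  w \in CW -> connect (de (mutilate Gc CZ set0)) c w ->
  connect (de (mutilate Gc (CZ :|: nonanc Gc CZ CX CW) set0)) c w.
Proof.
move=> hw /connectP [p hp et]; subst w.
elim: p c hp hw => [|d p IH] c /=; first by rewrite connect0.
case/andP => hcd hp hw.
apply: connect_trans (connect1 _) (IH _ hp hw).
move: hcd => /= /and3P [h1 h2 h3]; rewrite /= h1 h3 andbT /nonanc !inE (negbTE h2) /=.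
apply/negP => /andP [_ /forall_inP H].
have := H _ hw; rewrite /anc; apply/negP/negPn/connectP; exists p => //.
Qed.

Section Transfer.
Variables (C : finType) (Gc : mgraph C) (sz : C -> nat).
Hypothesis hsz : forall c, 1 < sz c.
Variables (rhom rhoa : C -> nat) (A B S : {set C}).
Local Notation Gm := (mutilate Gc A B).
Hypothesis hrhoa : forall c, reach (de Gm) S c -> c \notin S ->
  exists d, [/\ de Gm c d, reach (de Gm) S d & rhoa d < rhoa c].
Local Notation VV := {c : C & 'I_(sz c)}.
Local Notation G := (GG Gc sz rhom rhoa).
Local Notation Gv := (mutilate G (clus (@clv C sz) A) (clus (@clv C sz) B)).
Local Notation mv := (mainv hsz).
Local Notation av := (auxv hsz).

Lemma desc (v : VV) : reach (de Gm) S (clv v) ->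
  exists u, [/\ connect (de Gv) v u, clv u \in S & (clv u = clv v \/ clv u \notin A)].
Proof.
have [n] := ubnP (rhoa (clv v)); elim: n v => // n IH v hlt hr.
case hS: (clv v \in S); first by exists v; split => //; left.
have [d [hcd hrd hlt']] := hrhoa hr (negbT hS).
have hltd : rhoa (clv (av d)) < n by rewrite clv_aux; lia.
have [u [hcu huS hu]] := IH (av d) hltd hrd.
move: hcd => /= /and3P [hcd hdA hvB].
exists u; split => //.
- apply: connect_trans _ hcu; apply: connect1.
  rewrite /= !inE clv_aux hdA hvB !andbT /Gde clv_aux hcd /=.
  idtac.
  by case: (ism v) => //=; rewrite hlt'.
- by right; case: hu => [->|//]; rewrite clv_aux.
Qed.

Definition mstep (e : ekind * C) : ekind * VV := (e.1, mv e.2).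

Lemma snd_map s : map snd (map mstep s) = map mv (map snd s).
Proof. by elim: s => //= e s ->. Qed.
Lemma fst_map s : map fst (map mstep s) = map fst s.
Proof. by elim: s => //= e s ->. Qed.
Lemma verts_map x s : walk_verts (mv x) (map mstep s) = map mv (walk_verts x s).
Proof. by rewrite /walk_verts snd_map. Qed.

Lemma walk_map x s : uniq (walk_verts x s) -> walk_ok Gm x s -> mono_ok rhom x s ->
  walk_ok Gv (mv x) (map mstep s).
Proof.
elim: s x => [|[k v] s IH] x //=.
rewrite /walk_verts /= => /andP [hx hu] /andP [hst hw] /andP [hm hmo].
rewrite IH // andbT.
have hxv : x != v by apply: contraNneq hx => ->; rewrite inE eqxx.
move: hst hm; rewrite /step_ok /=; case: k => /=.
- move=> /and3P [h1 h2 h3] hm; rewrite !inE !clv_main h2 h3 !andbT /Gde !clv_main h1 /=.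
  by rewrite hm.
- move=> /and3P [h1 h2 h3] hm; rewrite !inE !clv_main h2 h3 !andbT /Gde !clv_main h1 /=.
  by rewrite hm.
- move=> /and3P [h1 h2 h3] _; rewrite !inE !clv_main h2 h3 !andbT /Gbi !clv_main h1 /=.
  by apply: contra_neq hxv => /mainv_inj.
Qed.

Lemma blocked_back x s : blocked Gv (clus (@clv C sz) S) (mv x) (map mstep s) -> blocked Gm S x s.
Proof.
rewrite /blocked verts_map fst_map snd_map size_map last_map.
case=> [h|[h|[i [hi h]]]].
- by left; move: h; rewrite inE clv_main.
- by right; left; move: h; rewrite inE clv_main.
right; right; exists i; split => //.
have hi' : i < size (walk_verts x s) by case/andP: hi => _ hh; rewrite /walk_verts /= size_map; lia.
move: h; rewrite (nth_map x) // inE clv_main.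
case=> [[h1 h2]|[h1 h2]]; [left; split => // | right; split => //].
move=> w hw; apply/negP => hwS.
have hr : reach (de Gm) S (clv (mv (nth x (walk_verts x s) i))).
  by rewrite clv_main; apply/existsP; exists w; rewrite hwS.
have [u [hcu huS _]] := desc hr.
by have := h2 u hcu; rewrite inE huS.
Qed.

Lemma core (CY CX : {set C}) x s : x \in CY -> last x (map snd s) \in CX -> is_path Gm x s ->
  ~ blocked Gm S x s -> mono_ok rhom x s ->
  ~ dsep Gv (clus (@clv C sz) S) (clus (@clv C sz) CY) (clus (@clv C sz) CX).
Proof.
move=> hx hl /andP [hw hu] hb hm hd; apply: hb; apply: blocked_back; apply: hd.
- by rewrite inE clv_main.
- by rewrite snd_map last_map inE clv_main.
- by rewrite /is_path verts_map (map_inj_uniq (@mainv_inj C sz hsz)) hu (walk_map hu hw hm).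
Qed.

Lemma nonanc_eq (CX CZ CW : {set C}) :
  A = CZ :|: nonanc Gc CZ CX CW -> B = set0 -> S = CZ :|: CW ->
  [disjoint CX & CZ] -> [disjoint CX & CW] ->
  nonanc G (clus (@clv C sz) CZ) (clus (@clv C sz) CX) (clus (@clv C sz) CW)
  = clus (@clv C sz) (nonanc Gc CZ CX CW).
Proof.
move=> eA eB eS dXZ dXW.
apply/setP => v; rewrite /nonanc !inE.
case hX: (clv v \in CX) => //=.
apply/idP/idP.
- move=> /forall_inP H; apply/forall_inP => w hw; apply/negP => hanc.
  have hanc' : connect (de Gm) (clv v) w by rewrite eA eB; exact: anc_mut3 hw hanc.
  have hr : reach (de Gm) S (clv v).
    by apply/existsP; exists w; rewrite eS inE hw orbT hanc'.
  have [u [hcu huS hu]] := desc hr.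
  have huW : clv u \in CW.
    case: hu => [e|nA].
    - move: huS; rewrite e eS inE => /orP [] h //.
      by rewrite (disjointFr dXZ hX) in h.
    - move: huS; rewrite eS inE => /orP [h|//].
      by move: nA; rewrite eA inE h.
  have := H u; rewrite inE huW => /(_ isT); apply/negP; rewrite negbK /anc.
  apply: connect_sub hcu => a b hab; apply: connect1; move: hab.
  move=> /= /and3P [h1 h2 h3]; rewrite /= h1 !inE andbT.
  by move: h2; rewrite eA !inE negb_or => /andP [].
- move=> /forall_inP H; apply/forall_inP => w; rewrite inE => hw; apply/negP => hanc.
  have := H _ hw; apply/negP/negPn; rewrite /anc.
  apply: (connect_homo (f := @clv C sz)) hanc => a b /= /and3P [h1 h2 h3].
  rewrite !inE in h2 h3 *; move: h1; rewrite /Gde => /andP [-> _].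
  by rewrite h2.
Qed.

End Transfer.

Lemma build (C : finType) (Gc : mgraph C) (sz : C -> nat) (hsz : forall c, 1 < sz c)
  (A B S CY CX : {set C}) :
  ~ dsep (mutilate Gc A B) S CY CX ->
  exists rhom rhoa, (forall c, reach (de (mutilate Gc A B)) S c -> c \notin S ->
      exists d, [/\ de (mutilate Gc A B) c d, reach (de (mutilate Gc A B)) S d & rhoa d < rhoa c]) /\
    ~ dsep (mutilate (GG Gc sz rhom rhoa) (clus (@clv C sz) A) (clus (@clv C sz) B))
           (clus (@clv C sz) S) (clus (@clv C sz) CY) (clus (@clv C sz) CX).
Proof.
move=> hnd; apply: Classical_Prop.NNPP => H; apply: hnd => x s hx hl hp.
apply: Classical_Prop.NNPP => hb; apply: H.
have [rhom hm] := mono_exists (proj2 (andP hp)).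
exists rhom, (dist (de (mutilate Gc A B)) S).
have hr := @dist_prop _ (de (mutilate Gc A B)) S.
split; first exact: hr.
exact: (core hsz hr hx hl hp hb hm).
Qed.

Lemma all_rules (C : finType) (Gc : mgraph C) (CX CY CZ CW : {set C}) (sz : C -> nat)
  (hsz : forall c, 1 < sz c) :
  is_CDMG Gc ->
  [disjoint CX & CY] -> [disjoint CX & CZ] -> [disjoint CX & CW] ->
  [disjoint CY & CZ] -> [disjoint CY & CW] -> [disjoint CZ & CW] ->
  (~ dsep (mutilate Gc CZ set0) (CZ :|: CW) CY CX ->
   exists (V : finType) (cl : V -> C) (G : mgraph V),
     [/\ compatible Gc cl G, (forall c, #|[set v | cl v == c]| = sz c) &
      ~ dsep (mutilate G (clus cl CZ) set0)
             (clus cl CZ :|: clus cl CW) (clus cl CY) (clus cl CX)]) /\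
  (~ dsep (mutilate Gc CZ CX) (CZ :|: CW) CY CX ->
   exists (V : finType) (cl : V -> C) (G : mgraph V),
     [/\ compatible Gc cl G, (forall c, #|[set v | cl v == c]| = sz c) &
      ~ dsep (mutilate G (clus cl CZ) (clus cl CX))
             (clus cl CZ :|: clus cl CW) (clus cl CY) (clus cl CX)]) /\
  (~ dsep (mutilate Gc (CZ :|: nonanc Gc CZ CX CW) set0) (CZ :|: CW) CY CX ->
   exists (V : finType) (cl : V -> C) (G : mgraph V),
     [/\ compatible Gc cl G, (forall c, #|[set v | cl v == c]| = sz c) &
      ~ dsep (mutilate G (clus cl CZ :|: nonanc G (clus cl CZ) (clus cl CX) (clus cl CW)) set0)
             (clus cl CZ :|: clus cl CW) (clus cl CY) (clus cl CX)]).
Proof.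
move=> hC dXY dXZ dXW dYZ dYW dZW.
have bisym : forall a b, bi Gc a b = bi Gc b a.
  case: hC => V0 [cl0 [G0 [[hs _] [_ [_ hbi]]]]].
  have imp a b : bi Gc a b -> bi Gc b a.
    by move/hbi => [x [y [ex ey hxy]]]; apply/hbi; exists y, x; split => //; rewrite hs.
  by move=> a b; apply/idP/idP; apply: imp.
split; [|split].
- move=> hnd; have [rhom [rhoa [hr hd]]] := build hsz hnd.
  exists _, (@clv C sz), (GG Gc sz rhom rhoa); split.
  + exact: GG_compat.
  + exact: card_cluster.
  + by rewrite -clus_setU; rewrite clus_set0 in hd.
- move=> hnd; have [rhom [rhoa [hr hd]]] := build hsz hnd.
  exists _, (@clv C sz), (GG Gc sz rhom rhoa); split.
  + exact: GG_compat.
  + exact: card_cluster.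
  + by rewrite -clus_setU.
- move=> hnd; have [rhom [rhoa [hr hd]]] := build hsz hnd.
  exists _, (@clv C sz), (GG Gc sz rhom rhoa); split.
  + exact: GG_compat.
  + exact: card_cluster.
  + rewrite (nonanc_eq hsz rhom hr) // -!clus_setU.
    by rewrite clus_set0 in hd.
Qed.

Theorem theorem4 (C : finType) (Gc : mgraph C) (CX CY CZ CW : {set C}) (r : regime C) :
  is_CDMG Gc ->
  [disjoint CX & CY] -> [disjoint CX & CZ] -> [disjoint CX & CW] ->
  [disjoint CY & CZ] -> [disjoint CY & CW] -> [disjoint CZ & CW] ->
  regime_ok r ->
  (* rule 1 *)
  (~ dsep (mutilate Gc CZ set0) (CZ :|: CW) CY CX ->
   exists (V : finType) (cl : V -> C) (G : mgraph V),
     [/\ compatible Gc cl G, sizes_match r cl &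
      ~ dsep (mutilate G (clus cl CZ) set0)
             (clus cl CZ :|: clus cl CW) (clus cl CY) (clus cl CX)]) /\
  (* rule 2 *)
  (~ dsep (mutilate Gc CZ CX) (CZ :|: CW) CY CX ->
   exists (V : finType) (cl : V -> C) (G : mgraph V),
     [/\ compatible Gc cl G, sizes_match r cl &
      ~ dsep (mutilate G (clus cl CZ) (clus cl CX))
             (clus cl CZ :|: clus cl CW) (clus cl CY) (clus cl CX)]) /\
  (* rule 3 *)
  (~ dsep (mutilate Gc (CZ :|: nonanc Gc CZ CX CW) set0) (CZ :|: CW) CY CX ->
   exists (V : finType) (cl : V -> C) (G : mgraph V),
     [/\ compatible Gc cl G, sizes_match r cl &
      ~ dsep (mutilate G (clus cl CZ :|: nonanc G (clus cl CZ) (clus cl CX) (clus cl CW)) set0)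
             (clus cl CZ :|: clus cl CW) (clus cl CY) (clus cl CX)]).
Proof.
move=> hC d1 d2 d3 d4 d5 d6 hreg.
case: r hreg => [|sz] hreg.
- have hsz : forall c : C, 1 < (fun _ => 2) c by [].
  have [h1 [h2 h3]] := all_rules hsz hC d1 d2 d3 d4 d5 d6.
  split; [|split] => hnd.
  + by have [V [cl [G [a _ c]]]] := h1 hnd; exists V, cl, G.
  + by have [V [cl [G [a _ c]]]] := h2 hnd; exists V, cl, G.
  + by have [V [cl [G [a _ c]]]] := h3 hnd; exists V, cl, G.
- exact: all_rules hreg hC d1 d2 d3 d4 d5 d6.
Qed.
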